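(* Let $f\in C^1$ and suppose $f'$ is Lipschitz continuous on the interval between $u_L$ and $u_R$ (i.e. on $[\min\{u_L,u_R\},\max\{u_L,u_R\}]$). Then the Riemann problem $U_t+f(U)_x=0$ for $x\in\mathbb{R}$, $t>0$, with $U(x,0)=u_L$ for $x<0$ and $U(x,0)=u_R$ for $x>0$, has at most one self-similar solution $U(x,t)=u^*(x/t)$ satisfying the viscous wave fan profile criterion.
   Context: Viscous wave fan profile criterion: a self-similar Riemann solution $U(x,t)=u^*(\xi)$, $\xi=x/t$, satisfies it iff there exist solutions $u_\varepsilon\in C^2(\mathbb{R})$ of the Dafermos ODE problem $\varepsilon u_{\xi\xi}=(f'(u)-\xi)u_\xi$ on $\mathbb{R}$, $u(-\infty)=u_L$, $u(+\infty)=u_R$, such that $u_\varepsilon\to u^*$ in $L^1_{loc}(\mathbb{R})$ as $\varepsilon\to 0$. The corollary follows from the paper's Theorem 1.1: under the stated Lipschitz hypothesis, for every $\varepsilon>0$ this ODE problem has exactly one solution. *)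

(* Defs.v *)
From HB Require Import structures.
From mathcomp Require Import all_boot all_order all_algebra.
From mathcomp Require Import all_classical all_reals all_analysis.
Set Implicit Arguments. Unset Strict Implicit. Unset Printing Implicit Defensive.
Import Order.TTheory GRing.Theory Num.Theory.
Import numFieldNormedType.Exports.
Local Open Scope classical_set_scope.
Local Open Scope ring_scope.

Section Defs.
Variable R : realType.

Definition C1 (f : R -> R) : Prop :=
  (forall x, derivable f x 1) /\ continuous (derive1 f).

Definition C2 (u : R -> R) : Prop :=
  (forall x, derivable u x 1) /\ (forall x, derivable (derive1 u) x 1) /\
  continuous (derive1 (derive1 u)).

Definition deriv_lipschitz_between (f : R -> R) (uL uR : R) : Prop :=
  exists L : R, forall x y,
    x \in `[Num.min uL uR, Num.max uL uR] ->
    y \in `[Num.min uL uR, Num.max uL uR] ->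
    `|derive1 f x - derive1 f y| <= L * `|x - y|.

Definition dafermos_solution (f : R -> R) (uL uR eps : R) (u : R -> R) : Prop :=
  [/\ C2 u,
      (forall xi, eps * (derive1 (derive1 u)) xi = (derive1 f (u xi) - xi) * (derive1 u) xi),
      u x @[x --> -oo] --> uL &
      u x @[x --> +oo] --> uR].

(* Viscous wave fan profile criterion for the self-similar profile ustar:
   there are solutions u_eps (eps > 0) of the Dafermos problem with
   u_eps --> ustar in L^1_loc(R) as eps --> 0+. *)
Definition viscous_wave_fan_profile (f : R -> R) (uL uR : R) (ustar : R -> R)
  : Prop :=
  measurable_fun setT ustar /\
  exists u : R -> R -> R,
    (forall eps, 0 < eps -> dafermos_solution f uL uR eps (u eps)) /\
    (forall a b : R,
       (fun eps => (\int[lebesgue_measure]_(x in `[a, b]) (`|u eps x - ustar x|)%:E)%E)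
         @ 0^'+ --> 0%E).

End Defs.

(* Main.v *)
Require Import Defs.
From HB Require Import structures.
From mathcomp Require Import all_boot all_order all_algebra.
From mathcomp Require Import all_classical all_reals all_analysis.
From mathcomp Require Import ring lra.
Import Order.TTheory GRing.Theory Num.Theory.
Import numFieldNormedType.Exports.
Local Open Scope classical_set_scope.
Local Open Scope ring_scope.
Section L1.
Variable R : realType.

Lemma isd_cont (g : R -> R) (x d : R) : is_derive x (1:R) g d -> {for x, continuous g}.
Proof. by case=> H _; apply/differentiable_continuous/derivable1_diffP. Qed.

Lemma deriv0_const (g : R -> R) (lo : R) :
  (forall y, lo < y -> is_derive y (1:R) g 0) ->
  forall x y, lo < x -> lo < y -> g x = g y.
Proof.
move=> Hd.
suff H : forall x y, lo < x -> x <= y -> g x = g y.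
  move=> x y lx ly; case: (leP x y) => xy; first exact: H.
  by symmetry; apply: H => //; exact: ltW.
move=> x y lx xy.
have [||c _] := @MVT_segment R g (fun _ => 0) x y xy.
- move=> z; rewrite in_itv/= => /andP[xz _]; apply: Hd; exact: lt_trans lx xz.
- apply: continuous_in_subspaceT => z; rewrite inE/= in_itv/= => /andP[xz _].
  apply: (@isd_cont _ _ 0); apply: Hd; exact: lt_le_trans lx xz.
- by rewrite mul0r => /eqP; rewrite subr_eq0 => /eqP.
Qed.

Lemma nonvanish (F : R -> R) (eps : R) (u d a : R -> R) :
  0 < eps -> continuous F ->
  (forall x, is_derive x (1:R) u (d x)) -> (forall x, is_derive x (1:R) d (a x)) ->
  (forall x, eps * a x = (F (u x) - x) * d x) ->
  forall x0, d x0 = 0 -> forall x, d x = 0.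
Proof.
move=> e0 Fc ud da ode x0 d0 x.
pose b := fun x => (F (u x) - x) / eps.
have bc : continuous b.
  move=> y; rewrite /b; apply: cvgM; last exact: cvg_cst.
  apply: cvgB; last exact: cvg_id.
  apply: continuous_comp; last exact: Fc.
  exact: isd_cont (ud y).
have ab : forall y, a y = b y * d y.
  move=> y; rewrite /b mulrAC -ode mulrAC mulfV ?mul1r //; exact: lt0r_neq0.
pose lo := Num.min x x0 - 1.
pose A y := (\int[lebesgue_measure]_(t in `[lo, y]) b t)%R.
have Ad : forall y, lo < y -> is_derive y (1:R) A (b y).
  move=> y ly.
  have [] := @continuous_FTC1_closed R b lo y (y + 1) _ _ ly (bc y).
  - by rewrite ltrDl.
  - apply: continuous_compact_integrable; first exact: segment_compact.
    exact: continuous_subspaceT.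
  move=> dA dAv; apply: is_derive_eq (derivableP dA) _.
  by rewrite -derive1E.
pose z y := d y * expR (- A y).
have zd : forall y, lo < y -> is_derive y (1:R) z 0.
  move=> y ly.
  have h1 : is_derive y (1:R) (expR \o (- A)) (expR ((- A) y) * - b y).
    apply: is_derive1_comp; last exact: is_deriveN (Ad y ly).
  have := is_deriveM (da y) h1.
  have -> : z = (d * (expR \o (- A)))%R by apply/funext.
  move=> h2; apply: is_derive_eq (h2) _ => //.
  rewrite ab /= /GRing.scale/=; ring.
have lox : lo < x.
  have h : Num.min x x0 <= x by rewrite ge_min lexx.
  rewrite /lo; lra.
have lox0 : lo < x0.
  have h : Num.min x x0 <= x0 by rewrite ge_min lexx orbT.
  rewrite /lo; lra.
have := @deriv0_const z lo zd x x0 lox lox0.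
rewrite /z d0 mul0r => /eqP; rewrite mulf_eq0 => /orP[/eqP //|].
by rewrite gt_eqF // expR_gt0.
Qed.

End L1.
Section L2.
Variable R : realType.

Lemma mvt_ge (g dg : R -> R) (x y k : R) : x <= y ->
  (forall z, is_derive z (1:R) g (dg z)) ->
  (forall z, x <= z <= y -> k <= dg z) -> k * (y - x) <= g y - g x.
Proof.
move=> xy gd kb.
have [|c cin ->] := @MVT_segment R g dg x y xy (fun z _ => gd z).
- by apply: continuous_subspaceT => z; exact: isd_cont (gd z).
apply: ler_wpM2r; first by rewrite subr_ge0.
by apply: kb; move: cin; rewrite in_itv.
Qed.

Lemma mvt_le (g dg : R -> R) (x y k : R) : x <= y ->
  (forall z, is_derive z (1:R) g (dg z)) ->
  (forall z, x <= z <= y -> dg z <= k) -> g y - g x <= k * (y - x).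
Proof.
move=> xy gd kb.
have [|c cin ->] := @MVT_segment R g dg x y xy (fun z _ => gd z).
- by apply: continuous_subspaceT => z; exact: isd_cont (gd z).
apply: ler_wpM2r; first by rewrite subr_ge0.
by apply: kb; move: cin; rewrite in_itv.
Qed.

Lemma ivt0 (d : R -> R) : continuous d -> forall x y, d x <= 0 -> 0 <= d y ->
  exists c, d c = 0.
Proof.
move=> dc x y dx dy.
case: (leP x y) => xy.
- have [||c _ E] := @IVT R d x y 0 xy; last by exists c.
  + exact: continuous_subspaceT.
  + by rewrite ge_min dx le_max dy orbT.
- have [||c _ E] := @IVT R d y x 0 (ltW xy); last by exists c.
  + exact: continuous_subspaceT.
  + by rewrite ge_min dx orbT le_max dy.
Qed.

Lemma sign_const (d a : R -> R) : (forall x, is_derive x (1:R) d (a x)) ->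
  (forall x, d x != 0) -> (forall x, 0 < d x) \/ (forall x, d x < 0).
Proof.
move=> da dn0.
have dc : continuous d := fun x => @isd_cont R d x (a x) (da x).
case: (pselect (forall x, 0 < d x)) => [|/existsNP[x /negP]]; first by left.
rewrite -leNgt => dx.
right => y; rewrite ltNge; apply/negP => dy.
have [c /eqP] := @ivt0 d dc x y dx dy.
by rewrite (negbTE (dn0 c)).
Qed.

Lemma incr (u d : R -> R) : (forall x, is_derive x (1:R) u (d x)) ->
  (forall x, 0 < d x) -> forall x y, x < y -> u x < u y.
Proof.
move=> ud dp x y xy.
have [|c _ E] := @MVT R u d x y xy (fun z _ => ud z).
- by apply: continuous_subspaceT => z; exact: isd_cont (ud z).
by rewrite -subr_gt0 E mulr_gt0 // subr_gt0.
Qed.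

Lemma bounds (u d : R -> R) (uL uR : R) : (forall x, is_derive x (1:R) u (d x)) ->
  (forall x, 0 < d x) -> u x @[x --> -oo] --> uL -> u x @[x --> +oo] --> uR ->
  forall x, uL < u x < uR.
Proof.
move=> ud dp hL hR x.
have h1 : u (x + 1) <= uR.
  apply: (cvgr_to_ge hR); near=> t; apply: ltW; apply: (@incr u d ud dp).
  near: t; apply: nbhs_pinfty_gt; exact: num_real.
have h2 : uL <= u (x - 1).
  apply: (cvgr_to_le hL); near=> t; apply: ltW; apply: (@incr u d ud dp).
  near: t; apply: nbhs_ninfty_lt; exact: num_real.
have h3 : u x < u (x + 1) by apply: (@incr u d ud dp); rewrite ltrDl.
have h4 : u (x - 1) < u x by apply: (@incr u d ud dp); rewrite ltrBlDr ltrDl.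
apply/andP; split; [exact: le_lt_trans h2 h4 | exact: lt_le_trans h3 h1].
Unshelve. all: by end_near. Qed.

Lemma tailR (F : R -> R) (eps uL uR : R) (u d a : R -> R) :
  0 < eps -> continuous F ->
  (forall x, is_derive x (1:R) u (d x)) -> (forall x, is_derive x (1:R) d (a x)) ->
  (forall x, eps * a x = (F (u x) - x) * d x) ->
  (forall x, 0 < d x) -> u x @[x --> -oo] --> uL -> u x @[x --> +oo] --> uR ->
  d x @[x --> +oo] --> 0.
Proof.
move=> e0 Fc ud da ode dp hL hR.
have bd := @bounds u d uL uR ud dp hL hR.
have hF : (F \o u) x @[x --> +oo] --> F uR := cvg_comp _ _ hR (Fc uR).
have [M [_ HM]] : \forall t \near +oo, (F \o u) t < F uR + 1.
  by apply: (cvgr_lt _ hF); rewrite ltrDl.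
pose m := Num.max M (F uR + 1) + 1.
have am : forall c, m <= c -> a c <= 0.
  move=> c mc.
  have q1 : M <= Num.max M (F uR + 1) by rewrite le_max lexx.
  have q2 : F uR + 1 <= Num.max M (F uR + 1) by rewrite le_max lexx orbT.
  rewrite /m in mc.
  have h1 : M < c by lra.
  have h2 : F uR + 1 < c by lra.
  have h3 := HM c h1; rewrite /= in h3.
  have : eps * a c < 0 by rewrite ode pmulr_llt0 //; lra.
  by rewrite pmulr_rlt0 // => /ltW.
apply/cvgrPdist_lt => e he; near=> t.
rewrite sub0r normrN ger0_norm; last exact: ltW.
have tT : m + (uR - uL) / e < t.
  by near: t; apply: nbhs_pinfty_gt; exact: num_real.
rewrite ltNge; apply/negP => et.
have mt : m <= t.
  have : 0 <= (uR - uL) / e.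
    by apply: divr_ge0; [have := bd 0; move=> /andP[]; lra | exact: ltW he].
  lra.
have H1 : e * (t - m) <= u t - u m.
  apply: (@mvt_ge u d) => // z /andP[mz zt].
  apply: le_trans et _.
  have := @mvt_le d a z t 0 zt da.
  rewrite mul0r => H; suff : d t - d z <= 0 by lra.
  apply: H => w /andP[zw _]; apply: am; exact: le_trans mz zw.
have H2 : (uR - uL) / e < t - m by lra.
rewrite ltr_pdivrMr in H2; last exact: he.
have := bd t; have := bd m; move=> /andP[? ?] /andP[? ?].
have : (t - m) * e = e * (t - m) by rewrite mulrC.
lra.
Unshelve. all: by end_near. Qed.

Lemma tailL (F : R -> R) (eps uL uR : R) (u d a : R -> R) :
  0 < eps -> continuous F ->
  (forall x, is_derive x (1:R) u (d x)) -> (forall x, is_derive x (1:R) d (a x)) ->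
  (forall x, eps * a x = (F (u x) - x) * d x) ->
  (forall x, 0 < d x) -> u x @[x --> -oo] --> uL -> u x @[x --> +oo] --> uR ->
  d x @[x --> -oo] --> 0.
Proof.
move=> e0 Fc ud da ode dp hL hR.
have bd := @bounds u d uL uR ud dp hL hR.
have hF : (F \o u) x @[x --> -oo] --> F uL := cvg_comp _ _ hL (Fc uL).
have [M [_ HM]] : \forall t \near -oo, F uL - 1 < (F \o u) t.
  by apply: (cvgr_gt _ hF); rewrite ltrBlDr ltrDl.
pose m := Num.min M (F uL - 1) - 1.
have am : forall c, c <= m -> 0 <= a c.
  move=> c mc.
  have q1 : Num.min M (F uL - 1) <= M by rewrite ge_min lexx.
  have q2 : Num.min M (F uL - 1) <= F uL - 1 by rewrite ge_min lexx orbT.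
  rewrite /m in mc.
  have h1 : c < M by lra.
  have h2 : c < F uL - 1 by lra.
  have h3 := HM c h1; rewrite /= in h3.
  have : 0 < eps * a c by rewrite ode pmulr_lgt0 //; lra.
  by rewrite pmulr_rgt0 // => /ltW.
apply/cvgrPdist_lt => e he; near=> t.
rewrite sub0r normrN ger0_norm; last exact: ltW.
have tT : t < m - (uR - uL) / e.
  by near: t; apply: nbhs_ninfty_lt; exact: num_real.
rewrite ltNge; apply/negP => et.
have mt : t <= m.
  have : 0 <= (uR - uL) / e.
    by apply: divr_ge0; [have := bd 0; move=> /andP[]; lra | exact: ltW he].
  lra.
have H1 : e * (m - t) <= u m - u t.
  apply: (@mvt_ge u d) => // z /andP[tz zm].
  apply: le_trans et _.
  have := @mvt_ge d a t z 0 tz da.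
  rewrite mul0r => H; suff : 0 <= d z - d t by lra.
  apply: H => w /andP[_ wz]; apply: am; exact: le_trans wz zm.
have H2 : (uR - uL) / e < m - t by lra.
rewrite ltr_pdivrMr in H2; last exact: he.
have := bd t; have := bd m; move=> /andP[? ?] /andP[? ?].
have : (m - t) * e = e * (m - t) by rewrite mulrC.
lra.
Unshelve. all: by end_near. Qed.

End L2.
Section L3.
Variable R : realType.
Variables (F : R -> R) (eps uL uR : R) (u1 d1 a1 u2 d2 a2 : R -> R).
Hypothesis e0 : 0 < eps.
Hypothesis ud1 : forall x, is_derive x (1:R) u1 (d1 x).
Hypothesis da1 : forall x, is_derive x (1:R) d1 (a1 x).
Hypothesis ode1 : forall x, eps * a1 x = (F (u1 x) - x) * d1 x.
Hypothesis ud2 : forall x, is_derive x (1:R) u2 (d2 x).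
Hypothesis da2 : forall x, is_derive x (1:R) d2 (a2 x).
Hypothesis ode2 : forall x, eps * a2 x = (F (u2 x) - x) * d2 x.
Hypothesis dp1 : forall x, 0 < d1 x.
Hypothesis dp2 : forall x, 0 < d2 x.
Hypothesis hL1 : u1 x @[x --> -oo] --> uL.
Hypothesis hR1 : u1 x @[x --> +oo] --> uR.
Hypothesis hL2 : u2 x @[x --> -oo] --> uL.
Hypothesis hR2 : u2 x @[x --> +oo] --> uR.
Hypothesis tL1 : d1 x @[x --> -oo] --> 0.
Hypothesis tR1 : d1 x @[x --> +oo] --> 0.
Hypothesis tL2 : d2 x @[x --> -oo] --> 0.
Hypothesis tR2 : d2 x @[x --> +oo] --> 0.

Let X2 (w : R) : R := xget 0 [set t | u2 t = w].

Let inc2 := @incr R u2 d2 ud2 dp2.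

Let inc2le x y : u2 x <= u2 y -> x <= y.
Proof. by move=> h; rewrite leNgt; apply/negP => /inc2; rewrite ltNge h. Qed.

Let X2K t : X2 (u2 t) = t.
Proof.
have : u2 (X2 (u2 t)) = u2 t by apply: (@xgetPex R 0 [set s | u2 s = u2 t]); exists t.
by move=> h; apply/le_anti/andP; split; apply: inc2le; rewrite h.
Qed.

Let surj x : exists t, u2 t = u1 x.
Proof.
have /andP[b1 b2] := @bounds R u1 d1 uL uR ud1 dp1 hL1 hR1 x.
have [M [_ HM]] : \forall t \near +oo, u1 x < u2 t by apply: (cvgr_gt _ hR2).
have [m [_ Hm]] : \forall t \near -oo, u2 t < u1 x by apply: (cvgr_lt _ hL2).
pose p := Num.max M 0 + 1; pose q := Num.min m 0 - 1.
have hp : M < p.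
  have : M <= Num.max M 0 by rewrite le_max lexx.
  rewrite /p; lra.
have hq : q < m.
  have : Num.min m 0 <= m by rewrite ge_min lexx.
  rewrite /q; lra.
have u2c : continuous u2 := fun y => @isd_cont R u2 y (d2 y) (ud2 y).
have gc : continuous (fun t => u2 t - u1 x).
  by move=> y; apply: cvgB; [exact: u2c | exact: cvg_cst].
have g1 : u2 q - u1 x <= 0 by have := Hm q hq; lra.
have g2 : 0 <= u2 p - u1 x by have := HM p hp; lra.
have [c E] := @ivt0 R (fun t => u2 t - u1 x) gc q p g1 g2.
by exists c; apply/eqP; rewrite -subr_eq0 E.
Qed.

Let tau (x : R) : R := X2 (u1 x).

Let tauE x : u2 (tau x) = u1 x.
Proof. by rewrite /tau; have [t <-] := surj x; rewrite X2K. Qed.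

Let d2n0 x : d2 x != 0. Proof. exact: lt0r_neq0 (dp2 x). Qed.

Let taud x : is_derive x (1:R) tau ((d2 (tau x))^-1 * d1 x).
Proof.
have h : is_derive (u1 x) (1:R) X2 (d2 (tau x))^-1.
  rewrite -tauE; apply: (@is_derive_inverse R u2 X2 (d2 (tau x)) (tau x) _ _ (ud2 (tau x)) (d2n0 _)).
  - by near=> s; exact: X2K.
  - by near=> s; exact: (@isd_cont R u2 s (d2 s) (ud2 s)).
exact: (is_derive1_comp h (ud1 x)).
Unshelve. all: by end_near. Qed.

Let P := fun x => d1 x - d2 (tau x).
Let D := fun x => x - tau x.
Let Q := fun x => P x * D x.
Let pd x := a1 x - a2 (tau x) * ((d2 (tau x))^-1 * d1 x).
Let dd x := 1 - (d2 (tau x))^-1 * d1 x.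

Let Pd x : is_derive x (1:R) P (pd x).
Proof.
have h := is_derive1_comp (da2 (tau x)) (taud x).
have h2 := is_deriveB (da1 x) h.
have E : (d1 - (d2 \o tau))%R = P by apply/funext => y.
rewrite E in h2. exact: h2.
Qed.

Let Dd x : is_derive x (1:R) D (dd x).
Proof.
have := is_deriveB (@is_derive_id _ _ x 1) (taud x).
by have -> : (id - tau)%R = D by apply/funext => y.
Qed.

Let pdE x : eps * pd x = - D x * d1 x.
Proof.
have h1 := ode1 x; have h2 := ode2 (tau x); rewrite tauE in h2.
have nz := d2n0 (tau x).
rewrite /pd /D mulrBr mulrA h1 h2; field.
by [].
Qed.

Let Qd x : is_derive x (1:R) Q (P x * dd x + D x * pd x).
Proof.
have := is_deriveM (Pd x) (Dd x).
by have -> : (P * D)%R = Q by apply/funext => y.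
Qed.

Let qE x : P x * dd x + D x * pd x =
  - (P x ^+ 2 / d2 (tau x)) - D x ^+ 2 * d1 x / eps.
Proof.
have nz := d2n0 (tau x).
have pdE' : pd x = - D x * d1 x / eps.
  rewrite -pdE mulrAC mulfV ?mul1r //; exact: lt0r_neq0.
rewrite pdE' /dd /P; field.
by rewrite lt0r_neq0 // andbT.
Qed.

Let tau_pinf : tau x @[x --> +oo] --> +oo.
Proof.
apply/cvgryPge => A.
have /andP[_ b2] := @bounds R u2 d2 uL uR ud2 dp2 hL2 hR2 A.
near=> x; apply: inc2le; rewrite tauE; apply: ltW.
by near: x; apply: (cvgr_gt _ hR1).
Unshelve. all: by end_near. Qed.

Let tau_ninf : tau x @[x --> -oo] --> -oo.
Proof.
apply/cvgrNyPle => A.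
have /andP[b1 _] := @bounds R u2 d2 uL uR ud2 dp2 hL2 hR2 A.
near=> x; apply: inc2le; rewrite tauE; apply: ltW.
by near: x; apply: (cvgr_lt _ hL1).
Unshelve. all: by end_near. Qed.

Let P_pinf : P x @[x --> +oo] --> 0.
Proof.
have h := cvgB tR1 (cvg_comp _ _ tau_pinf tR2); rewrite subr0 in h.
exact: h.
Qed.

Let P_ninf : P x @[x --> -oo] --> 0.
Proof.
have h := cvgB tL1 (cvg_comp _ _ tau_ninf tL2); rewrite subr0 in h.
exact: h.
Qed.

Let qle0 x : P x * dd x + D x * pd x <= 0.
Proof.
rewrite qE.
have h1 : 0 <= P x ^+ 2 / d2 (tau x) by apply: divr_ge0; [exact: sqr_ge0 | exact: ltW].
have h2 : 0 <= D x ^+ 2 * d1 x / eps.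
  by apply: divr_ge0; [apply: mulr_ge0; [exact: sqr_ge0 | exact: ltW] | exact: ltW].
lra.
Qed.

Let Qnincr x y : x <= y -> Q y <= Q x.
Proof.
move=> xy; have := @mvt_le R Q (fun t => P t * dd t + D t * pd t) x y 0 xy Qd.
rewrite mul0r => H; suff : Q y - Q x <= 0 by lra.
by apply: H => z _; exact: qle0.
Qed.

Let P2d x : is_derive x (1:R) (P * P)%R (P x * pd x + P x * pd x).
Proof. exact: is_deriveM (Pd x) (Pd x). Qed.

Let P2dE x : eps * (P x * pd x + P x * pd x) = - (2 * Q x * d1 x).
Proof.
have -> : eps * (P x * pd x + P x * pd x) = 2 * P x * (eps * pd x) by ring.
by rewrite pdE /Q; ring.
Qed.

Let Qz x : Q x = 0.
Proof.
have Pz : P x = 0 -> Q x = 0 by rewrite /Q => ->; rewrite mul0r.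
have P2z : P x * P x <= 0 -> Q x = 0.
  move=> h; apply: Pz.
  have : P x * P x == 0 by rewrite eq_le h /= -expr2 sqr_ge0.
  by rewrite mulf_eq0 orbb => /eqP.
case: (ltgtP (Q x) 0) => // Qx; apply: P2z.
- (* Q x < 0 : look to the right *)
  have hh : P t * P t @[t --> +oo] --> (0:R).
    by rewrite -(mulr0 0); apply: cvgM; exact: P_pinf.
  apply: (cvgr_to_ge hh).
  near=> y.
  have xy : x <= y by near: y; apply: nbhs_pinfty_ge; exact: num_real.
  have := @mvt_ge R (P * P)%R (fun t => P t * pd t + P t * pd t) x y 0 xy P2d.
  rewrite mul0r /= => H; suff : 0 <= P y * P y - P x * P x by lra.
  apply: H => z /andP[xz _].
  have Qzn : Q z < 0 by apply: le_lt_trans (Qnincr x z xz) Qx.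
  have := P2dE z; have := dp1 z => h1 h2.
  have : 0 <= eps * (P z * pd z + P z * pd z).
    rewrite h2 oppr_ge0; apply: mulr_le0_ge0; last exact: ltW.
    by apply: mulr_ge0_le0 => //; exact: ltW.
  by rewrite pmulr_rge0.
- (* Q x > 0 : look to the left *)
  have hh : P t * P t @[t --> -oo] --> (0:R).
    by rewrite -(mulr0 0); apply: cvgM; exact: P_ninf.
  apply: (cvgr_to_ge hh).
  near=> y.
  have yx : y <= x by near: y; apply: nbhs_ninfty_le; exact: num_real.
  have := @mvt_le R (P * P)%R (fun t => P t * pd t + P t * pd t) y x 0 yx P2d.
  rewrite mul0r /= => H; suff : P x * P x - P y * P y <= 0 by lra.
  apply: H => z /andP[_ zx].
  have Qzp : 0 < Q z by apply: lt_le_trans Qx (Qnincr z x zx).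
  have := P2dE z; have := dp1 z => h1 h2.
  have : eps * (P z * pd z + P z * pd z) <= 0.
    rewrite h2 oppr_le0; apply: mulr_ge0; last exact: ltW.
    by apply: mulr_ge0 => //; exact: ltW.
  by rewrite pmulr_rle0.
Unshelve. all: by end_near. Qed.

Lemma core_eq x : u1 x = u2 x.
Proof.
have QE : Q = (fun _ => 0) by apply/funext => y; exact: Qz.
have h1 := @derive_val _ _ _ _ _ _ _ (Qd x).
have h0 : is_derive x (1:R) (fun _ : R => (0:R)) 0 := is_derive_cst 0 x 1.
have h2 := @derive_val _ _ _ _ _ _ _ h0.
rewrite QE h2 qE in h1.
have g1 : 0 <= P x ^+ 2 / d2 (tau x) by apply: divr_ge0; [exact: sqr_ge0 | exact: ltW].
have g2 : 0 <= D x ^+ 2 * d1 x / eps.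
  by apply: divr_ge0; [apply: mulr_ge0; [exact: sqr_ge0 | exact: ltW] | exact: ltW].
have g3 : D x ^+ 2 * d1 x / eps = 0 by lra.
have g4 : D x ^+ 2 == 0.
  move: g3 => /eqP; rewrite mulf_eq0 invr_eq0 (gt_eqF e0) orbF.
  by rewrite mulf_eq0 (gt_eqF (dp1 x)) orbF.
have : D x = 0 by apply/eqP; rewrite -sqrf_eq0.
rewrite /D => /eqP; rewrite subr_eq0 => /eqP tx.
by rewrite -tauE -tx.
Qed.

End L3.
Section L4.
Variable R : realType.

Lemma cst_lim (c l : R) (F : set_system R) : ProperFilter F ->
  (fun _ => c) x @[x --> F] --> l -> c = l.
Proof.
move=> PF h; apply/le_anti/andP; split.
- by apply: (cvgr_to_ge h); near=> x.
- by apply: (cvgr_to_le h); near=> x.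
Unshelve. all: by end_near. Qed.

Lemma classify (F : R -> R) (eps uL uR : R) (u d a : R -> R) :
  0 < eps -> continuous F ->
  (forall x, is_derive x (1:R) u (d x)) -> (forall x, is_derive x (1:R) d (a x)) ->
  (forall x, eps * a x = (F (u x) - x) * d x) ->
  u x @[x --> -oo] --> uL -> u x @[x --> +oo] --> uR ->
  [\/ uL = uR /\ (forall x, u x = uL),
      uL < uR /\ (forall x, 0 < d x) |
      uR < uL /\ (forall x, d x < 0)].
Proof.
move=> e0 Fc ud da ode hL hR.
case: (pselect (exists x0, d x0 = 0)) => [[x0 dx0]|nz].
- have d0 := @nonvanish R F eps u d a e0 Fc ud da ode x0 dx0.
  have ud0 : forall x, is_derive x (1:R) u 0 by move=> x; rewrite -(d0 x).
  have uc : forall x, u x = u 0 by move=> x; exact: is_derive_0_is_cst.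
  have ue : u = (fun _ => u 0) by apply/funext => x; exact: uc.
  rewrite ue in hL hR.
  have E1 := @cst_lim (u 0) uL _ _ hL; have E2 := @cst_lim (u 0) uR _ _ hR.
  by apply: Or31; split; [rewrite -E1 -E2 | move=> x; rewrite uc E1].
- have nz' : forall x, d x != 0.
    by move=> x; apply/eqP => h; apply: nz; exists x.
  case: (@sign_const R d a da nz') => [dp|dn].
  + have /andP[b1 b2] := @bounds R u d uL uR ud dp hL hR 0.
    by apply: Or32; split => //; exact: lt_trans b2.
  + have ud' : forall x, is_derive x (1:R) (- u)%R (- d x) by move=> x; exact: is_deriveN.
    have dp' : forall x, 0 < - d x by move=> x; rewrite oppr_gt0.
    have hL' : (- u)%R x @[x --> -oo] --> - uL by exact: cvgN.
    have hR' : (- u)%R x @[x --> +oo] --> - uR by exact: cvgN.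
    have /andP[b1 b2] := @bounds R (- u)%R (fun x => - d x) (- uL) (- uR) ud' dp' hL' hR' 0.
    apply: Or33; split => //; rewrite -ltrN2; exact: lt_trans b2.
Qed.

Lemma neg_data (F : R -> R) (eps : R) (u d a : R -> R) :
  (forall x, is_derive x (1:R) u (d x)) -> (forall x, is_derive x (1:R) d (a x)) ->
  (forall x, eps * a x = (F (u x) - x) * d x) ->
  [/\ (forall x, is_derive x (1:R) (- u)%R ((- d)%R x)),
      (forall x, is_derive x (1:R) (- d)%R ((- a)%R x)) &
      (forall x, eps * ((- a)%R x) = ((fun w => F (- w)) ((- u)%R x) - x) * ((- d)%R x))].
Proof.
move=> ud da ode; split.
- by move=> x; exact: is_deriveN.
- by move=> x; exact: is_deriveN.
- by move=> x; rewrite /= opprK mulrN ode mulrN.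
Qed.

Lemma daf_unique (f : R -> R) (uL uR eps : R) (u1 u2 : R -> R) : C1 f -> 0 < eps ->
  dafermos_solution f uL uR eps u1 -> dafermos_solution f uL uR eps u2 ->
  forall x, u1 x = u2 x.
Proof.
move=> [_ Fc] e0 [[du1 [dd1 _]] ode1 hL1 hR1] [[du2 [dd2 _]] ode2 hL2 hR2].
have ud1 : forall x, is_derive x (1:R) u1 (derive1 u1 x).
  by move=> x; rewrite derive1E; exact: derivableP.
have ud2 : forall x, is_derive x (1:R) u2 (derive1 u2 x).
  by move=> x; rewrite derive1E; exact: derivableP.
have da1 : forall x, is_derive x (1:R) (derive1 u1) (derive1 (derive1 u1) x).
  by move=> x; rewrite derive1E; exact: derivableP.
have da2 : forall x, is_derive x (1:R) (derive1 u2) (derive1 (derive1 u2) x).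
  by move=> x; rewrite derive1E; exact: derivableP.
have [[E c1]|[lt1 p1]|[lt1 n1]] := @classify (derive1 f) eps uL uR u1 _ _ e0 Fc ud1 da1 ode1 hL1 hR1;
have [[E2 c2]|[lt2 p2]|[lt2 n2]] := @classify (derive1 f) eps uL uR u2 _ _ e0 Fc ud2 da2 ode2 hL2 hR2;
  try by (move=> x; lra).
- by move=> x; rewrite c1 c2.
- apply: (@core_eq R (derive1 f) eps uL uR u1 _ _ u2 _ _ e0 ud1 da1 ode1 ud2 da2 ode2
    p1 p2 hL1 hR1 hL2 hR2).
  + exact: (@tailL R _ eps uL uR u1 _ _ e0 Fc ud1 da1 ode1 p1 hL1 hR1).
  + exact: (@tailR R _ eps uL uR u1 _ _ e0 Fc ud1 da1 ode1 p1 hL1 hR1).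
  + exact: (@tailL R _ eps uL uR u2 _ _ e0 Fc ud2 da2 ode2 p2 hL2 hR2).
  + exact: (@tailR R _ eps uL uR u2 _ _ e0 Fc ud2 da2 ode2 p2 hL2 hR2).
- have [vd1 va1 vode1] := @neg_data _ eps _ _ _ ud1 da1 ode1.
  have [vd2 va2 vode2] := @neg_data _ eps _ _ _ ud2 da2 ode2.
  have Gc : continuous (fun w => derive1 f (- w)).
    by move=> w; apply: continuous_comp; [exact: continuousN | exact: Fc].
  have q1 : forall x, 0 < (- derive1 u1)%R x by move=> x; rewrite /= oppr_gt0.
  have q2 : forall x, 0 < (- derive1 u2)%R x by move=> x; rewrite /= oppr_gt0.
  have gL1 : (- u1)%R x @[x --> -oo] --> - uL by exact: cvgN.
  have gR1 : (- u1)%R x @[x --> +oo] --> - uR by exact: cvgN.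
  have gL2 : (- u2)%R x @[x --> -oo] --> - uL by exact: cvgN.
  have gR2 : (- u2)%R x @[x --> +oo] --> - uR by exact: cvgN.
  move=> x; apply: oppr_inj.
  apply: (@core_eq R (fun w => derive1 f (- w)) eps (- uL) (- uR) (- u1)%R (- derive1 u1)%R (- derive1 (derive1 u1))%R
    (- u2)%R (- derive1 u2)%R (- derive1 (derive1 u2))%R e0 vd1 va1 vode1 vd2 va2 vode2
    q1 q2 gL1 gR1 gL2 gR2).
  + exact: (@tailL R _ eps _ _ _ _ _ e0 Gc vd1 va1 vode1 q1 gL1 gR1).
  + exact: (@tailR R _ eps _ _ _ _ _ e0 Gc vd1 va1 vode1 q1 gL1 gR1).
  + exact: (@tailL R _ eps _ _ _ _ _ e0 Gc vd2 va2 vode2 q2 gL2 gR2).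
  + exact: (@tailR R _ eps _ _ _ _ _ e0 Gc vd2 va2 vode2 q2 gL2 gR2).
Qed.

End L4.
From mathcomp Require Import measurable_realfun.
Section L5.
Variable R : realType.
Local Notation mu := (@lebesgue_measure R).

Lemma int_le_zero (I : \bar R) (J1 J2 : R -> \bar R) :
  J1 e @[e --> 0^'+] --> 0%E -> J2 e @[e --> 0^'+] --> 0%E ->
  (forall e, 0 < e -> (I <= J1 e + J2 e)%E) -> (I <= 0)%E.
Proof.
move=> h1 h2 H; apply/lee_addgt0Pr => r r0; rewrite add0e.
move/fine_cvgP: h1 => [f1 h1]; move/fine_cvgP: h2 => [f2 h2].
have r2 : 0 < r / 2 by rewrite divr_gt0.
near (0:R)^'+ => e.
have e0 : 0 < e by near: e; exact: nbhs_right_gt.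
have := H e e0.
have g1 : J1 e \is a fin_num by near: e; exact: f1.
have g2 : J2 e \is a fin_num by near: e; exact: f2.
have k1 : fine (J1 e) < r / 2 by near: e; exact: (cvgr_lt _ h1).
have k2 : fine (J2 e) < r / 2 by near: e; exact: (cvgr_lt _ h2).
rewrite -(fineK g1) -(fineK g2) -EFinD => /le_trans; apply.
rewrite lee_fin; lra.
Unshelve. all: by end_near. Qed.

Lemma mabs (D : set R) (g h : R -> R) : measurable D ->
  measurable_fun setT g -> measurable_fun setT h ->
  measurable_fun D (fun x => ((`|g x - h x|)%:E : \bar R)).
Proof.
move=> mD mg mh; apply/measurable_EFinP.
apply: measurableT_comp; first exact: normr_measurable.
apply: measurable_funB.
- exact: measurable_funS mg.
- exact: measurable_funS mh.
Qed.

Lemma int_zero (u1 u2 : R -> R) (v1 v2 : R -> R -> R) (a b : R) :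
  measurable_fun setT u1 -> measurable_fun setT u2 ->
  (forall e, 0 < e -> measurable_fun setT (v1 e)) ->
  (forall e, 0 < e -> forall x, v1 e x = v2 e x) ->
  (fun e => (\int[mu]_(x in `[a, b]) (`|v1 e x - u1 x|)%:E)%E) @ 0^'+ --> 0%E ->
  (fun e => (\int[mu]_(x in `[a, b]) (`|v2 e x - u2 x|)%:E)%E) @ 0^'+ --> 0%E ->
  (\int[mu]_(x in `[a, b]) (`|u1 x - u2 x|)%:E)%E = 0%E.
Proof.
move=> m1 m2 mv E h1 h2.
apply/le_anti/andP; split; last first.
  by apply: integral_ge0 => x _; rewrite lee_fin normr_ge0.
apply: (@int_le_zero _ _ _ h1 h2) => e e0.
have mab : measurable `[a, b] by exact: measurable_itv.
have p1 : forall x, [set` `[a, b]] x -> (0 <= (`|v1 e x - u1 x|)%:E)%E.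
  by move=> x _; rewrite lee_fin normr_ge0.
have p2 : forall x, [set` `[a, b]] x -> (0 <= (`|v2 e x - u2 x|)%:E)%E.
  by move=> x _; rewrite lee_fin normr_ge0.
have q1 := @mabs _ _ _ mab (mv e e0) m1.
have mv2 : measurable_fun setT (v2 e).
  have -> : v2 e = v1 e by apply/funext => x; rewrite (E e e0 x).
  exact: mv.
have q2 := @mabs _ _ _ mab mv2 m2.
have HD := @ge0_integralD _ _ _ mu _ mab _ _ p1 q1 p2 q2.
rewrite -HD.
apply: ge0_le_integral => //.
- exact: mabs.
- exact: emeasurable_funD.
- move=> x _; rewrite -EFinD lee_fin -(E e e0 x).
  have -> : u1 x - u2 x = (v1 e x - u2 x) - (v1 e x - u1 x) by ring.
  by rewrite [X in _ <= X]addrC; apply: ler_normB.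
Qed.

Lemma ae_from_int (u1 u2 : R -> R) : measurable_fun setT u1 -> measurable_fun setT u2 ->
  (forall n : nat, (\int[mu]_(x in `[(- (n%:R : R))%R, (n%:R : R)]) (`|u1 x - u2 x|)%:E)%E = 0%E) ->
  {ae mu, forall x, u1 x = u2 x}.
Proof.
move=> m1 m2 H.
have Hn : forall n : nat, \forall x \ae mu,
    [set` `[- (n%:R : R), n%:R]] x -> (u1 x - u2 x)%:E = (cst 0%E : R -> \bar R) x.
  move=> n.
  have mD : measurable [set` `[- (n%:R : R), n%:R]] by exact: measurable_itv.
  have mf : measurable_fun [set` `[- (n%:R : R), n%:R]] (fun x => (u1 x - u2 x)%:E).
    apply/measurable_EFinP; apply: measurable_funB.
    - exact: measurable_funS m1.
    - exact: measurable_funS m2.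
  apply: (ae_eq_integral_abs mu mD mf).1.
  rewrite -(H n); apply: eq_integral => x _; by rewrite abse_EFin.
have := ae_foralln Hn.
apply: filterS => x Hx.
pose n := (Num.Def.trunc `|x|).+1.
have xn : [set` `[- (n%:R : R), n%:R]] x.
  rewrite /= in_itv /= -ler_norml; apply: ltW; exact: truncnS_gt.
have := Hx n xn; rewrite /= => /eqP; rewrite eqe subr_eq0 => /eqP.
done.
Qed.

End L5.
From mathcomp Require Import measurable_realfun.

Theorem corollary1p2 (R : realType) (f : R -> R) (uL uR : R) :
  C1 f -> deriv_lipschitz_between f uL uR ->
  forall u1 u2 : R -> R,
    viscous_wave_fan_profile f uL uR u1 ->
    viscous_wave_fan_profile f uL uR u2 ->
    {ae (@lebesgue_measure R), forall x, u1 x = u2 x}.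
Proof.
move=> C1f _ u1 u2 [mu1 [v1 [sv1 cv1]]] [mu2 [v2 [sv2 cv2]]].
have E : forall e, 0 < e -> forall x, v1 e x = v2 e x.
  by move=> e e0; exact: (@daf_unique R f uL uR e (v1 e) (v2 e) C1f e0 (sv1 e e0) (sv2 e e0)).
have mv : forall e, 0 < e -> measurable_fun setT (v1 e).
  move=> e e0; apply: continuous_measurable_fun => x.
  have [[du _] _ _ _] := sv1 e e0.
  exact: (@isd_cont R (v1 e) x _ (derivableP (du x))).
apply: (@ae_from_int R u1 u2 mu1 mu2) => n.
exact: (@int_zero R u1 u2 v1 v2 _ _ mu1 mu2 mv E (cv1 _ _) (cv2 _ _)).
Qed.
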